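(* A pure qubit state $\rho_\psi=|\psi\rangle\langle\psi|$, $|\psi\rangle\in\mathbb{C}^2$, is coherence-distillable (i.e. $C_d(\rho_\psi)>0$) if and only if $F_c(\rho_\psi)>\frac12$.
   Context: Coherence is taken with respect to the computational basis $\{|0\rangle,|1\rangle\}$; incoherent states are those diagonal in this basis, and incoherent operations are quantum channels admitting Kraus operators $K_i$ each mapping incoherent states to (multiples of) incoherent states. The set of maximally coherent qubit states is $\mathcal{M}=\{\frac{1}{\sqrt2}(e^{\mathfrak{i}\theta_0}|0\rangle+e^{\mathfrak{i}\theta_1}|1\rangle):\theta_0,\theta_1\in[0,2\pi]\}$, and the coherence fraction is $F_c(\rho)=\max_{|\phi\rangle\in\mathcal{M}}\langle\phi|\rho|\phi\rangle$. The distillable coherence $C_d(\rho)$ is the supremum of achievable rates $R=m/n$ such that, asymptotically as $n\to\infty$ and with error $\epsilon\to0$, $m$ copies of $|\phi_2\rangle=\frac{1}{\sqrt2}(|0\rangle+|1\rangle)$ can be obtained from $n$ copies of $\rho$ by incoherent operations. A state is called distillable if $C_d(\rho)>0$. *)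

(* Defs.v *)
From HB Require Import structures.
From mathcomp Require Import all_boot all_order all_algebra.
From mathcomp Require Import all_classical all_reals all_analysis.
From mathcomp Require Import complex.
Set Implicit Arguments. Unset Strict Implicit. Unset Printing Implicit Defensive.
Import Order.TTheory GRing.Theory Num.Theory.
Local Open Scope ring_scope.
Local Open Scope classical_set_scope.
Local Open Scope complex_scope.
Import numFieldNormedType.Exports.

Section Coherence.
Variable R : realType.
Local Notation C := R[i].

Definition adj (m n : nat) (A : 'M[C]_(m, n)) : 'M[C]_(n, m) :=
  (map_mx (@Num.conj C) A)^T.

(* positive semidefinite (over C, 0 <= z means z real and nonnegative) *)
Definition psd (d : nat) (A : 'M[C]_d) : Prop :=
  forall v : 'cV[C]_d, 0 <= (adj v *m A *m v) 0 0.

Definition density (d : nat) (A : 'M[C]_d) : Prop := psd A /\ \tr A = 1.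

Definition incoherent_state (d : nat) (A : 'M[C]_d) : Prop :=
  density A /\ is_diag_mx A.

Definition incoherent_kraus (d d' : nat) (K : 'M[C]_(d', d)) : Prop :=
  forall s : 'M[C]_d, incoherent_state s ->
    exists (c : C) (t : 'M[C]_d'), incoherent_state t /\ K *m s *m adj K = c *: t.

Definition incoherent_operation (d d' : nat) (ks : seq 'M[C]_(d', d)) : Prop :=
  \sum_(K <- ks) adj K *m K = 1%:M /\ (forall K, K \in ks -> incoherent_kraus K).

Definition apply_kraus (d d' : nat) (ks : seq 'M[C]_(d', d)) (A : 'M[C]_d)
  : 'M[C]_d' := \sum_(K <- ks) K *m A *m adj K.

Definition qbit (n : nat) (k : nat) (i : 'I_(2 ^ n)) : 'I_2 :=
  inord (odd (i %/ 2 ^ k)).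

Definition tens_pow (n : nat) (A : 'M[C]_2) : 'M[C]_(2 ^ n) :=
  \matrix_(i, j) \prod_(k < n) A (qbit k i) (qbit k j).

Definition phi2 : 'cV[C]_2 := \col_(i < 2) ((Num.sqrt (2 : R))^-1)%:C.
Definition phi2_proj : 'M[C]_2 := phi2 *m adj phi2.

Definition expi (t : R) : C := Complex (cos t) (sin t).
Definition max_coh (t0 t1 : R) : 'cV[C]_2 :=
  \col_(i < 2) (((Num.sqrt (2 : R))^-1)%:C * expi (if i == 0 then t0 else t1)).

Definition coherence_fraction (rho : 'M[C]_2) : R :=
  sup [set x : R | exists t0 t1 : R,
      t0 \in `[0, 2 * pi]%R /\ t1 \in `[0, 2 * pi]%R /\
      x = complex.Re ((adj (max_coh t0 t1) *m rho *m max_coh t0 t1) 0 0)].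

Definition achievable_rate (rho : 'M[C]_2) (r : R) : Prop :=
  exists (m : nat -> nat) (L : forall n : nat, seq 'M[C]_(2 ^ m n, 2 ^ n)),
    (forall n, incoherent_operation (L n)) /\
    ((fun n : nat => (m n)%:R / n%:R : R) @ \oo --> r) /\
    ((fun n : nat => 1 - complex.Re
        (\tr (tens_pow (m n) phi2_proj *m apply_kraus (L n) (tens_pow n rho))))
       @ \oo --> (0 : R)).

Definition distillable_coherence (rho : 'M[C]_2) : \bar R :=
  ereal_sup [set (r%:E)%E | r in achievable_rate rho].

Definition distillable (rho : 'M[C]_2) : Prop :=
  (0 < distillable_coherence rho)%E.

End Coherence.

(* Main.v *)
Require Import Defs.
From HB Require Import structures.
From mathcomp Require Import all_boot all_order all_algebra.
From mathcomp Require Import all_classical all_reals all_analysis.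
From mathcomp Require Import complex.
Import Order.TTheory GRing.Theory Num.Theory.
Local Open Scope ring_scope.
From mathcomp Require Import ring lra zify.

Module P1.
Local Close Scope ring_scope.
Lemma bits_inj n i j : (i < 2^n)%N -> (j < 2^n)%N ->
  (forall k, (k < n)%N -> odd (i %/ 2^k) = odd (j %/ 2^k)) -> i = j.
Proof.
elim: n i j => [|n IH] i j.
  by rewrite expn0 !ltnS !leqn0 => /eqP -> /eqP ->.
move=> hi hj hb.
have h0 : odd i = odd j by have := hb 0%N isT; rewrite expn0 !divn1.
have h2 : i %/ 2 = j %/ 2.
  apply: IH.
  - by rewrite ltn_divLR // -expnSr.
  - by rewrite ltn_divLR // -expnSr.
  move=> k hk; rewrite -!divnMA -expnS; exact: hb.
by rewrite -(ssrnat.odd_double_half i) -(ssrnat.odd_double_half j) h0 -!divn2 h2.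
Qed.

Local Open Scope ring_scope.
Lemma sum_bits (T : comPzSemiRingType) n (f : nat -> bool -> T) :
  \sum_(i < 2^n) \prod_(k < n) f k (odd (i %/ 2^k)%N) =
  \prod_(k < n) (f k false + f k true).
Proof.
elim: n => [|n IH].
  by rewrite expn0 big_ord1 !big_ord0.
have -> : (2 ^ n.+1 = 2^n + 2^n)%N by rewrite expnS mul2n addnn.
rewrite big_split_ord /= big_ord_recr /= mulrDr -IH !big_distrl /=.
congr (_ + _); apply: eq_bigr => i _; rewrite big_ord_recr /=.
  congr (_ * _); rewrite divn_small //.
congr (_ * _).
  apply: eq_bigr => k _.
  have hk : (2 ^ k %| 2 ^ n)%N by rewrite dvdn_exp2l // ltnW.
  rewrite divnDl // -expnB ?(ltnW (ltn_ord k)) //.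
  by rewrite ssrnat.oddD oddX subn_eq0 leqNgt ltn_ord.
rewrite divnDl ?dvdnn // divnn expn_gt0 /=.
rewrite divn_small //.
Qed.

End P1.
Import P1.

Module P2.
Section S2.
Variable R : realType.
Local Notation C := R[i].

Lemma adjE m n (A : 'M[C]_(m,n)) i j : adj A i j = (A j i)^*.
Proof. by rewrite /adj !mxE. Qed.

Lemma inord_false : (inord false : 'I_2) = 0.
Proof. by apply: val_inj; rewrite /= inordK. Qed.
Lemma inord_true : (inord true : 'I_2) = 1.
Proof. by apply: val_inj; rewrite /= inordK. Qed.

Lemma qbit_val n k (i : 'I_(2^n)) : (qbit k i : nat) = odd (i %/ 2^k)%N.
Proof. by rewrite /qbit inordK // ltnS leq_b1. Qed.

Lemma sum_qbits n (f : nat -> 'I_2 -> C) :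
  \sum_(i < 2^n) \prod_(k < n) f k (qbit k i) = \prod_(k < n) \sum_(b < 2) f k b.
Proof.
rewrite (@sum_bits _ n (fun k b => f k (inord b))).
by apply: eq_bigr => k _; rewrite !big_ord_recr big_ord0 /= add0r inord_false inord_true; congr (f k _ + f k _); apply: val_inj.
Qed.

Lemma qbit_inj n (i j : 'I_(2^n)) :
  (forall k : 'I_n, qbit k i = qbit k j) -> i = j.
Proof.
move=> h; apply: val_inj; apply: (@bits_inj n i j (ltn_ord i) (ltn_ord j)).
move=> k hk; move: (h (Ordinal hk)) => /(congr1 (@nat_of_ord 2)).
rewrite !qbit_val /=.
by case: (odd _); case: (odd _).
Qed.

Definition tvec n (psi : 'cV[C]_2) : 'cV[C]_(2^n) :=
  \col_i \prod_(k < n) psi (qbit k i) 0.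

Lemma tens_pow_outer n (psi : 'cV[C]_2) :
  tens_pow n (psi *m adj psi) = tvec n psi *m adj (tvec n psi).
Proof.
apply/matrixP => i j; rewrite !mxE big_ord1 adjE !mxE rmorph_prod -big_split.
by apply: eq_bigr => k _; rewrite mxE big_ord1 adjE.
Qed.

Lemma unitE (psi : 'cV[C]_2) : adj psi *m psi = 1%:M ->
  \sum_(b < 2) psi b 0 * (psi b 0)^* = 1.
Proof.
move/matrixP => /(_ 0 0); rewrite !mxE /= => h.
have <- : \sum_(j < 2) adj psi 0 j * psi j 0 = 1 by exact: h.
by apply: eq_bigr => b _; rewrite adjE mulrC.
Qed.

Lemma tvec_norm n (psi : 'cV[C]_2) : adj psi *m psi = 1%:M ->
  \sum_i tvec n psi i 0 * (tvec n psi i 0)^* = 1.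
Proof.
move=> /unitE h.
transitivity (\sum_(i < 2^n) \prod_(k < n) (psi (qbit k i) 0 * (psi (qbit k i) 0)^*)).
  by apply: eq_bigr => i _; rewrite mxE rmorph_prod -big_split.
by rewrite (@sum_qbits n (fun k b => psi b 0 * (psi b 0)^*)); apply: big1_idem => [|k _]; [exact: mulr1 | exact: h].
Qed.

Lemma mx11E (A : 'M[C]_(1,1)) (B : 'M[C]_(1,1)) : (A *m B) 0 0 = A 0 0 * B 0 0.
Proof. by rewrite mxE big_ord1. Qed.

Lemma psd_outer d (u : 'cV[C]_d) : psd (u *m adj u).
Proof.
move=> v.
rewrite mulmxA -mulmxA mx11E.
have -> : (adj u *m v) 0 0 = ((adj v *m u) 0 0)^*.
  rewrite !mxE rmorph_sum; apply: eq_bigr => i _.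
  by rewrite !adjE rmorphM /= conjCK mulrC.
exact: mul_conjC_ge0.
Qed.

Lemma trace_outer d (u : 'cV[C]_d) : \tr (u *m adj u) = \sum_i u i 0 * (u i 0)^*.
Proof. by apply: eq_bigr => i _; rewrite mxE big_ord1 adjE. Qed.

Lemma density_tens n (psi : 'cV[C]_2) : adj psi *m psi = 1%:M ->
  density (tens_pow n (psi *m adj psi)).
Proof.
move=> h; rewrite tens_pow_outer; split; first exact: psd_outer.
by rewrite trace_outer tvec_norm.
Qed.

End S2.

End P2.
Import P2.

Module P3.
Section S3.
Variable R : realType.
Local Notation C := R[i].

Lemma psd_diag d (D : 'M[C]_d) : is_diag_mx D -> (forall i, 0 <= D i i) -> psd D.
Proof.
move=> /is_diag_mxP hD h0 v.
rewrite mxE; apply: sumr_ge0 => j _.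
rewrite mxE (bigD1 j) //= big1 ?addr0; last first.
  by move=> i hij; rewrite hD ?mulr0.
rewrite adjE -mulrA mulrC -mulrA; apply: mulr_ge0 => //.
exact: mul_conjC_ge0.
Qed.

Lemma psd_diag_ge0 d (s : 'M[C]_d) i : psd s -> 0 <= s i i.
Proof.
move=> /(_ (delta_mx i 0 : 'cV[C]_d)).
suff -> : (adj (delta_mx i 0 : 'cV[C]_d) *m s *m (delta_mx i 0 : 'cV[C]_d)) 0 0 = s i i by [].
have -> : adj (delta_mx i 0 : 'cV[C]_d) = (delta_mx 0 i : 'rV[C]_d).
  apply/matrixP => a b; rewrite adjE !mxE.
  by case: (a == 0); case: (b == i); rewrite /= ?conjC0 ?conjC1 ?andbF ?andbT.
by rewrite -rowE -colE !mxE.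
Qed.

Lemma kraus_partial d d' (K : 'M[C]_(d', d)) : (0 < d')%N ->
  (forall i j j', j != j' -> K j i * (K j' i)^* = 0) -> incoherent_kraus K.
Proof.
move=> hd' hK s [[hs htr] /is_diag_mxP hdiag].
set X := K *m s *m adj K.
have XE : forall j j', X j j' = \sum_i s i i * (K j i * (K j' i)^*).
  move=> j j'; rewrite /X mxE; apply: eq_bigr => i _.
  rewrite mxE (bigD1 i) //= big1 ?addr0; last first.
    by move=> l hl; rewrite hdiag ?mulr0 // eq_sym.
  by rewrite adjE mulrA [K j i * _]mulrC.
have Xdiag : is_diag_mx X.
  apply/is_diag_mxP => j j' hjj; rewrite XE; apply: big1 => i _.
  by rewrite hK ?mulr0 //; apply/eqP => e; move: hjj; rewrite e eqxx.
have Xge0 : forall j, 0 <= X j j.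
  move=> j; rewrite XE; apply: sumr_ge0 => i _; apply: mulr_ge0.
    exact: psd_diag_ge0.
  exact: mul_conjC_ge0.
have tr_ge0 : 0 <= \tr X by apply: sumr_ge0 => j _.
have [tr0|trn0] := eqVneq (\tr X) 0.
  have X0 : X = 0.
    apply/matrixP => j j'; rewrite [RHS]mxE.
    have [<-|hjj] := eqVneq j j'.
      move: tr0; rewrite /mxtrace => /psumr_eq0P h.
      by apply: h => // k _; exact: Xge0.
    by move/is_diag_mxP: Xdiag => ->.
  exists 0, (delta_mx (Ordinal hd') (Ordinal hd')); split; last by rewrite scale0r.
  split.
    split.
      apply: psd_diag; first by apply/is_diag_mxP => a b hab; rewrite mxE;
        case: (a =P _) => [ha|//]; case: (b =P _) => [hb|//]; move: hab; rewrite ha hb eqxx.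
      by move=> a; rewrite mxE; case: (_ && _).
    rewrite /mxtrace (bigD1 (Ordinal hd')) //= big1 ?mxE ?eqxx ?addr0 //.
    by move=> a ha; rewrite mxE (negbTE ha).
  apply/is_diag_mxP => a b hab; rewrite mxE.
  by case: (a =P _) => [ha|//]; case: (b =P _) => [hb|//]; move: hab; rewrite ha hb eqxx.
exists (\tr X), ((\tr X)^-1 *: X); split; last by rewrite scalerA divff // scale1r.
have trgt0 : 0 < \tr X by rewrite lt_def trn0.
split; last first.
  apply/is_diag_mxP => a b hab; rewrite mxE.
  by move/is_diag_mxP: Xdiag => ->; rewrite ?mulr0.
split; last by rewrite mxtraceZ mulVf.
apply: psd_diag.
  apply/is_diag_mxP => a b hab; rewrite mxE.
  by move/is_diag_mxP: Xdiag => ->; rewrite ?mulr0.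
by move=> a; rewrite mxE; apply: mulr_ge0 => //; rewrite invr_ge0.
Qed.

Lemma apply_kraus_trace d d' (ks : seq 'M[C]_(d', d)) (A : 'M[C]_d) :
  \sum_(K <- ks) adj K *m K = 1%:M -> \tr (apply_kraus ks A) = \tr A.
Proof.
move=> h; rewrite /apply_kraus raddf_sum /=.
transitivity (\sum_(K <- ks) \tr ((adj K *m K) *m A)).
  by apply: eq_bigr => K _; rewrite mxtrace_mulC mulmxA.
by rewrite -raddf_sum /= -mulmx_suml h mul1mx.
Qed.

End S3.

End P3.
Import P3.

Module P4.
Arguments tvec {R} n psi.
Section S4.
Variable R : realType.
Local Notation C := R[i].

Lemma phi2_proj_entry a b : phi2_proj R a b = 2^-1.
Proof.
rewrite /phi2_proj mxE big_ord1 adjE !mxE.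
set x := (Num.sqrt (2 : R))^-1.
have -> : (x%:C%C)^* = x%:C%C by apply: conj_Creal; rewrite complex_real.
rewrite -rmorphM /= -expr2 /x exprVn sqr_sqrtr ?ler0n //.
by rewrite fmorphV /= rmorph_nat.
Qed.

Lemma phi2_tens_entry m i j : tens_pow m (phi2_proj R) i j = (2^-1) ^+ m.
Proof.
rewrite mxE; under eq_bigr do rewrite phi2_proj_entry.
by rewrite prodr_const card_ord.
Qed.

Lemma fid_formula m (X : 'M[C]_(2^m)) :
  \tr (tens_pow m (phi2_proj R) *m X) = (2^-1) ^+ m * \sum_i \sum_j X i j.
Proof.
rewrite /mxtrace [in RHS]exchange_big /= mulr_sumr; apply: eq_bigr => i _.
rewrite mxE mulr_sumr; apply: eq_bigr => j _.
by rewrite phi2_tens_entry.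
Qed.

Lemma inv2_powE (k : nat) : ((2^-1 : C) ^+ k) = (((2^-1 : R) ^+ k)%:C)%C.
Proof. by rewrite rmorphXn /= fmorphV /= rmorph_nat. Qed.

Lemma ord2_other (b x y : 'I_2) : x != b -> y != b -> x = y.
Proof.
by case: b => [[|[|b]] hb] //; case: x => [[|[|x]] hx] //; case: y => [[|[|y]] hy] //=;
  rewrite ?eqxx //= => _ _; apply: val_inj.
Qed.

Lemma incoh_tens (psi : 'cV[C]_2) (b : 'I_2) n : adj psi *m psi = 1%:M ->
  psi b 0 = 0 -> incoherent_state (tens_pow n (psi *m adj psi)).
Proof.
move=> hu hb; split; first exact: density_tens.
rewrite tens_pow_outer; apply/is_diag_mxP => i j hij.
rewrite mxE big_ord1 adjE.
have [ti|ti] := eqVneq (tvec n psi i 0) 0; first by rewrite ti mul0r.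
have [tj|tj] := eqVneq (tvec n psi j 0) 0; first by rewrite tj conjC0 mulr0.
exfalso; move: hij; apply/negP; rewrite negbK; apply/eqP; congr val.
apply: qbit_inj => k.
move: ti tj; rewrite !mxE => /prodf_neq0 ti /prodf_neq0 tj.
have := ti k isT; have := tj k isT.
have ne : forall x : 'I_2, psi x 0 != 0 -> x != b.
  by move=> x hx; apply: contraNneq hx => ->; rewrite hb.
by move=> /ne hj /ne hi; apply: ord2_other hi hj.
Qed.

End S4.

End P4.
Import P4.

Module P5.
Local Open Scope classical_set_scope.
Import numFieldNormedType.Exports.
Section S5.
Variable R : realType.
Local Notation C := R[i].

Lemma is_diag_add d (A B : 'M[C]_d) : is_diag_mx A -> is_diag_mx B -> is_diag_mx (A + B).
Proof.
move=> /is_diag_mxP hA /is_diag_mxP hB; apply/is_diag_mxP => i j hij.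
by rewrite mxE hA // hB // addr0.
Qed.

Lemma apply_kraus_diag d d' (ks : seq 'M[C]_(d', d)) s :
  (forall K, K \in ks -> incoherent_kraus K) -> incoherent_state s ->
  is_diag_mx (apply_kraus ks s).
Proof.
move=> hk hs; rewrite /apply_kraus.
elim: ks hk => [|K ks IH] hk; first by rewrite big_nil; exact: mx0_is_diag.
rewrite big_cons; apply: is_diag_add; last first.
  by apply: IH => K' hK'; apply: hk; rewrite inE hK' orbT.
have [c [t [[_ ht] ->]]] := hk K (mem_head _ _) s hs.
by apply/is_diag_mxP => i j hij; rewrite mxE (is_diag_mxP ht) // mulr0.
Qed.

Lemma diag_sum_all d (D : 'M[C]_d) : is_diag_mx D -> \sum_i \sum_j D i j = \tr D.
Proof.
move=> /is_diag_mxP hD; apply: eq_bigr => i _.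
rewrite (bigD1 i) //= big1 ?addr0 // => j hj; rewrite hD //.
by rewrite eq_sym.
Qed.

Lemma rate_zero (rho : 'M[C]_2) r :
  (forall n, incoherent_state (tens_pow n rho)) -> achievable_rate rho r -> r = 0.
Proof.
move=> hinc [m [L [hL [hrate hfid]]]].
have fidE : forall n, complex.Re (\tr (tens_pow (m n) (phi2_proj R) *m
          apply_kraus (L n) (tens_pow n rho))) = (2^-1) ^+ (m n).
  move=> n; rewrite fid_formula diag_sum_all; last first.
    by apply: apply_kraus_diag (hinc n) => K hK; case: (hL n) => _; apply.
  rewrite apply_kraus_trace; last by case: (hL n).
  by case: (hinc n) => -[_ ->] _; rewrite mulr1 inv2_powE.
have hfid' : (fun n => 1 - (2^-1 : R) ^+ (m n)) @ \oo --> (0 : R).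
  by apply: (cvg_trans _ hfid); apply: near_eq_cvg; near=> n; rewrite fidE.
have ev : \forall n \near \oo, m n = 0%N.
  move/cvgrPdist_lt : hfid' => /(_ (2^-1)); rewrite invr_gt0 ltr0n => /(_ isT).
  apply: filterS => n; rewrite sub0r normrN.
  case: (m n) => // k; rewrite ger0_norm; last first.
    by rewrite subr_ge0 exprn_ile1 //; lra.
  have h1 : (2^-1 : R) ^+ k <= 1 by rewrite exprn_ile1 //; lra.
  have h2 : (2^-1 : R) ^+ k.+1 <= 2^-1.
    by rewrite exprS -[X in _ <= X]mulr1 ler_pM2l //; lra.
  by move=> h; exfalso; lra.
have h0 : (fun n => (m n)%:R / n%:R : R) @ \oo --> (0 : R).
  by apply: cvg_near_cst; apply: filterS ev => n ->; rewrite mul0r.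
exact: (cvg_unique _ hrate h0).
Unshelve. all: by end_near.
Qed.

Lemma not_distill (rho : 'M[C]_2) :
  (forall n, incoherent_state (tens_pow n rho)) -> ~ distillable rho.
Proof.
move=> hinc; rewrite /distillable => h.
have : (distillable_coherence rho <= 0)%E.
  apply: ge_ereal_sup => _ [r hr <-].
  by rewrite (@rate_zero rho r hinc hr).
by rewrite leNgt h.
Qed.

End S5.

End P5.
Import P5.

Module P6.
Set Implicit Arguments. Unset Strict Implicit.
Section Proto.
Variable R : realType.
Local Notation C := R[i].
Variables n m : nat.
Local Notation D := (2 ^ n)%N.
Local Notation M := (2 ^ m)%N.

Definition ind (b : bool) : C := (b : nat)%:R.

Lemma ind_conj b : (ind b)^* = ind b.
Proof. by rewrite /ind conjC_nat. Qed.
Lemma ind_idem b : ind b * ind b = ind b.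
Proof. by case: b; rewrite /ind /= ?mulr1 ?mulr0. Qed.
Lemma ind_and a b : ind (a && b) = ind a * ind b.
Proof. by case: a; case: b; rewrite /ind /= ?mulr1 ?mulr0. Qed.
Lemma ind_not b : ind (~~ b) = 1 - ind b.
Proof. by case: b; rewrite /ind /= ?subr0 ?subrr. Qed.

Lemma sum_ind_eq (N x : nat) (F : nat -> C) : (x < N)%N ->
  \sum_(c < N) ind (c == x :> nat) * F c = F x.
Proof.
move=> hx; rewrite (bigD1 (Ordinal hx)) //= big1 ?addr0.
  by rewrite /ind eqxx mul1r.
by move=> c hc; rewrite /ind; case: eqP => [e|]; [move: hc; rewrite -(inj_eq val_inj) /= e eqxx | rewrite mul0r].
Qed.

Definition wt (i : 'I_D) : nat := #|[pred k : 'I_n | qbit k i != 0]|.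
Definition cls (w : nat) : seq 'I_D := [seq j <- enum 'I_D | wt j == w].
Definition rk (i : 'I_D) : nat := index i (cls (wt i)).
Definition full (w c : nat) : bool := (c.+1 * M <= size (cls w))%N.
Definition good (i : 'I_D) : bool := full (wt i) (rk i %/ M).

Lemma M_gt0 : (0 < M)%N. Proof. by rewrite expn_gt0. Qed.
Lemma D_gt0 : (0 < D)%N. Proof. by rewrite expn_gt0. Qed.

Lemma wt_le i : (wt i <= n)%N.
Proof. by rewrite /wt -[X in (_ <= X)%N](card_ord n) max_card. Qed.

Lemma in_cls i : i \in cls (wt i).
Proof. by rewrite mem_filter eqxx mem_enum. Qed.

Lemma rk_lt i : (rk i < size (cls (wt i)))%N.
Proof. by rewrite index_mem in_cls. Qed.

Lemma size_cls w : (size (cls w) <= D)%N.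
Proof. by rewrite /cls size_filter -[X in (_ <= X)%N](size_enum_ord D) count_size. Qed.

Lemma rk_inj i i' : wt i = wt i' -> rk i = rk i' -> i = i'.
Proof.
move=> hw; rewrite /rk hw => h.
by rewrite -(nth_index i (in_cls i)) hw h nth_index //; exact: in_cls.
Qed.

Lemma rank_count (w t : nat) : (t < size (cls w))%N ->
  \sum_(i < D) ind (wt i == w) * ind (rk i == t) = 1.
Proof.
move=> ht.
set x0 : 'I_D := Ordinal D_gt0.
set x := nth x0 (cls w) t.
have xin : x \in cls w by rewrite mem_nth.
have wx : wt x = w by move: xin; rewrite mem_filter => /andP [/eqP].
have rx : rk x = t by rewrite /rk wx index_uniq // filter_uniq // enum_uniq.
rewrite (bigD1 x) //= big1 ?addr0.
  by rewrite wx rx /ind !eqxx mulr1.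
move=> i hi; rewrite -ind_and /ind.
case: (_ =P _) => //= hw; case: (_ =P _) => //= hr.
by move: hi; rewrite (@rk_inj i x) ?eqxx // ?wx ?rx.
Qed.

Lemma divmodP (r c j : nat) : (j < M)%N ->
  (r == c * M + j)%N = (c == r %/ M)%N && (j == r %% M)%N.
Proof.
move=> hj; apply/eqP/andP => [->|[/eqP -> /eqP ->]]; last by rewrite -divn_eq.
rewrite divnMDl ?M_gt0 // divn_small // addn0 modnMDl modn_small //.
Qed.

Lemma sum_divmod (r : nat) (H : nat -> C) : (r < D)%N ->
  \sum_(c < D) \sum_(j < M) ind (r == c * M + j)%N * H c = H (r %/ M)%N.
Proof.
move=> hr.
transitivity (\sum_(c < D) ind (c == (r %/ M)%N :> nat) * H c); last first.
  apply: sum_ind_eq; apply: leq_ltn_trans hr; exact: leq_div.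
apply: eq_bigr => c _.
under eq_bigr => j _ do rewrite (divmodP _ _ (ltn_ord j)) ind_and mulrAC.
rewrite -mulr_sumr.
have := @sum_ind_eq M (r %% M)%N (fun _ => 1); rewrite ltn_pmod ?M_gt0 // => /(_ isT).
under eq_bigr do rewrite mulr1.
by move=> ->; rewrite mulr1.
Qed.


Lemma sum_ind_fin (T : finType) (x : T) (G : T -> C) :
  \sum_(y : T) ind (y == x) * G y = G x.
Proof.
rewrite (bigD1 x) //= big1 ?addr0; first by rewrite /ind eqxx mul1r.
by move=> y hy; rewrite /ind (negbTE hy) mul0r.
Qed.

Definition Kc (w : 'I_n.+1) (c : 'I_D) : 'M[C]_(M, D) :=
  \matrix_(j, i) (ind (wt i == w) * ind (rk i == c * M + j)%N * ind (full w c)).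
Definition Kb (l : 'I_D) : 'M[C]_(M, D) :=
  \matrix_(j, i) (ind (j == 0 :> nat) * ind (i == l) * ind (~~ good l)).
Definition ks : seq 'M[C]_(M, D) :=
  map (fun p : 'I_n.+1 * 'I_D => Kc p.1 p.2) (index_enum _) ++ map Kb (index_enum _).

Lemma ind_false b : b = false -> ind b = 0.
Proof. by move=> ->. Qed.

Lemma Kc_partial w c i (j j' : 'I_M) : j != j' -> Kc w c j i * (Kc w c j' i)^* = 0.
Proof.
move=> hj; rewrite !mxE !rmorphM /= !ind_conj.
case: (rk i =P c * M + j)%N => [e1|_]; last by rewrite [ind false]/ind !(mulr0, mul0r).
case: (rk i =P c * M + j')%N => [e2|_]; last by rewrite [ind false]/ind !(mulr0, mul0r).
by move: hj; rewrite e1 in e2; move/addnI: e2 => /val_inj ->; rewrite eqxx.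
Qed.

Lemma Kb_partial l i (j j' : 'I_M) : j != j' -> Kb l j i * (Kb l j' i)^* = 0.
Proof.
move=> hj; rewrite !mxE !rmorphM /= !ind_conj.
case: (j =P 0 :> nat) => [e1|_]; last by rewrite [ind false]/ind !(mulr0, mul0r).
case: (j' =P 0 :> nat) => [e2|_]; last by rewrite [ind false]/ind !(mulr0, mul0r).
by move: hj; rewrite (val_inj (etrans e1 (esym e2))) eqxx.
Qed.


Lemma adjKc_entry w c i i' : (adj (Kc w c) *m Kc w c) i i' =
  \sum_(j < M) ind (wt i == w) * ind (rk i == c * M + j)%N * ind (full w c) *
     (ind (wt i' == w) * ind (rk i' == c * M + j)%N * ind (full w c)).
Proof.
by rewrite mxE; apply: eq_bigr => j _; rewrite adjE !mxE !rmorphM /= !ind_conj.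
Qed.

Lemma adjKb_entry l i i' : (adj (Kb l) *m Kb l) i i' =
  \sum_(j < M) ind (j == 0 :> nat) * ind (i == l) * ind (~~ good l) *
     (ind (j == 0 :> nat) * ind (i' == l) * ind (~~ good l)).
Proof.
by rewrite mxE; apply: eq_bigr => j _; rewrite adjE !mxE !rmorphM /= !ind_conj.
Qed.

Lemma rk_ltD i : (rk i < D)%N.
Proof. exact: leq_trans (rk_lt i) (size_cls _). Qed.

Lemma ks_complete : \sum_(K <- ks) adj K *m K = 1%:M.
Proof.
apply/matrixP => i i'.
rewrite big_cat !big_map /= mxE summxE [X in _ + X]summxE.
have [<-|hii] := eqVneq i i'.
  have -> : (1%:M : 'M[C]_D) i i = 1 by rewrite mxE eqxx.
  transitivity (ind (good i) + ind (~~ good i)); last by rewrite ind_not addrC subrK.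
  congr (_ + _).
    rewrite -(pair_bigA _ (fun w c => (adj (Kc w c) *m Kc w c) i i)) /=.
    transitivity (\sum_(w < n.+1) ind (w == wt i :> nat) *
       \sum_(c < D) \sum_(j < M) ind (rk i == c * M + j)%N * ind (full w c)).
      apply: eq_bigr => w _; rewrite mulr_sumr; apply: eq_bigr => c _.
      rewrite adjKc_entry mulr_sumr; apply: eq_bigr => j _.
      rewrite [wt i == w]eq_sym.
      set A := ind (_ == _); set B := ind (rk i == _); set F := ind (full _ _).
      transitivity ((A * A) * (B * B) * (F * F)); first by ring.
      by rewrite !ind_idem; ring.
    rewrite (sum_ind_eq (fun w => \sum_(c < D) \sum_(j < M) ind (rk i == c * M + j)%N * ind (full w c))).
      by rewrite (@sum_divmod (rk i) (fun c => ind (full (wt i) c))) ?rk_ltD.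
    by rewrite ltnS wt_le.
  transitivity (\sum_(l : 'I_D) ind (l == i) * ind (~~ good l)).
    apply: eq_bigr => l _; rewrite adjKb_entry [i == l]eq_sym.
    set A := ind (l == i); set B := ind (~~ _).
    transitivity (\sum_(j < M) ind (j == 0 :> nat) * (1 : C) * (A * B)).
      apply: eq_bigr => j _.
      set Z := ind (_ == _); transitivity ((Z * Z) * (A * A) * (B * B)); first by ring.
      by rewrite !ind_idem; ring.
    by rewrite -big_distrl /= (@sum_ind_eq M 0 (fun _ => 1)) ?M_gt0 // mul1r.
  by rewrite (@sum_ind_fin _ i (fun l => ind (~~ good l))).
have -> : (1%:M : 'M[C]_D) i i' = 0 by rewrite mxE (negbTE hii).
rewrite big1 ?add0r ?big1 //.
  move=> l _; rewrite adjKb_entry; apply: big1 => j _.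
  case: (i =P l) => [e1|_]; last by rewrite [ind false]/ind !(mulr0, mul0r).
  case: (i' =P l) => [e2|_]; last by rewrite [ind false]/ind !(mulr0, mul0r).
  by move: hii; rewrite e1 e2 eqxx.
move=> [w c] _; rewrite adjKc_entry; apply: big1 => j _ /=.
case: (wt i =P w) => [e1|_]; last by rewrite [ind false]/ind !(mulr0, mul0r).
case: (wt i' =P w) => [e2|_]; last by rewrite [ind false]/ind !(mulr0, mul0r).
case: (rk i =P _) => [e3|_]; last by rewrite [ind false]/ind !(mulr0, mul0r).
case: (rk i' =P _) => [e4|_]; last by rewrite [ind false]/ind !(mulr0, mul0r).
by move: hii; rewrite (@rk_inj i i') ?eqxx // ?e1 ?e2 ?e3 ?e4.
Qed.

Lemma ks_incoh : incoherent_operation ks.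
Proof.
split; first exact: ks_complete.
move=> K; rewrite mem_cat => /orP [] /mapP [x _ ->]; apply: kraus_partial M_gt0 _.
  by move=> i j j' hj; apply: Kc_partial.
by move=> i j j' hj; apply: Kb_partial.
Qed.


Variable psi : 'cV[C]_2.
Local Notation Psi := (@tvec R n psi).

Lemma adj_mul p q r (A : 'M[C]_(p,q)) (B : 'M[C]_(q,r)) : adj (A *m B) = adj B *m adj A.
Proof. by rewrite /adj map_mxM trmx_mul. Qed.

Lemma sum_all_outer d' (A : 'M[C]_(d', D)) (u : 'cV[C]_D) :
  \sum_i \sum_j (A *m (u *m adj u) *m adj A) i j =
  (\sum_i (A *m u) i 0) * (\sum_i (A *m u) i 0)^*.
Proof.
rewrite mulmxA -mulmxA -adj_mul rmorph_sum big_distrl /=; apply: eq_bigr => i _.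
by rewrite big_distrr /=; apply: eq_bigr => j _; rewrite mxE big_ord1 adjE.
Qed.

Lemma ord2_1 (x : 'I_2) : x != 0 -> x = 1.
Proof. by case: x => [[|[|x]] hx] // _; apply: val_inj. Qed.

Lemma Psi_wt i : Psi i 0 = psi 0 0 ^+ (n - wt i) * psi 1 0 ^+ (wt i).
Proof.
rewrite mxE (bigID (fun k : 'I_n => qbit k i == 0)) /=.
congr (_ * _).
  rewrite (eq_bigr (fun _ => psi 0 0)); last by move=> k /eqP ->.
  rewrite prodr_const; congr (_ ^+ _).
  have h := cardC [pred k : 'I_n | qbit k i != 0]; rewrite card_ord in h.
  apply/eqP; rewrite -(eqn_add2r (wt i)) subnK ?wt_le //; apply/eqP.
  rewrite addnC; apply: etrans h; rewrite /wt; congr addn.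
  by apply: eq_card => k; rewrite !inE negbK.
rewrite (eq_bigr (fun _ => psi 1 0)); last by move=> k /ord2_1 ->.
by rewrite prodr_const.
Qed.

Lemma Psi_eq i i' : wt i = wt i' -> Psi i 0 = Psi i' 0.
Proof. by rewrite !Psi_wt => ->. Qed.

Lemma sum_j_rk (r c : nat) : \sum_(j < M) ind (r == c * M + j)%N = ind (c == (r %/ M)%N :> nat).
Proof.
under eq_bigr => j _ do rewrite (divmodP _ _ (ltn_ord j)) ind_and.
rewrite -mulr_sumr.
have := @sum_ind_eq M (r %% M)%N (fun _ => 1); rewrite ltn_pmod ?M_gt0 // => /(_ isT).
under eq_bigr do rewrite mulr1.
by move=> ->; rewrite mulr1.
Qed.

Definition chi w c i := ind (wt i == w) * ind (c == (rk i %/ M)%N :> nat).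

Lemma sigma_Kc (w : 'I_n.+1) (c : 'I_D) : \sum_j (Kc w c *m Psi) j 0 =
  ind (full w c) * \sum_i chi w c i * Psi i 0.
Proof.
under eq_bigr do rewrite mxE.
rewrite exchange_big mulr_sumr /=; apply: eq_bigr => i _.
under eq_bigr do rewrite mxE.
transitivity (\sum_(j < M) ind (rk i == c * M + j)%N * (ind (wt i == w) * ind (full w c) * Psi i 0)).
  by apply: eq_bigr => j _; ring.
by rewrite -big_distrl /= sum_j_rk /chi; ring.
Qed.

Lemma chunk_card (w : 'I_n.+1) (c : 'I_D) : full w c -> \sum_i chi w c i = M%:R.
Proof.
move=> hf.
transitivity (\sum_(j < M) (1 : C)); last by rewrite sumr_const card_ord.
under eq_bigr do rewrite /chi -sum_j_rk mulr_sumr.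
rewrite exchange_big /=; apply: eq_bigr => j _; apply: rank_count.
apply: leq_trans hf; rewrite mulSn addnC ltn_add2r; exact: ltn_ord.
Qed.

Lemma chi_wt w c i i' : chi w c i * chi w c i' != 0 -> wt i = wt i'.
Proof.
rewrite /chi; case: (wt i =P w) => [->|]; last by rewrite [ind false]/ind !mul0r eqxx.
by case: (wt i' =P w) => [->|]; last by rewrite [ind false]/ind !(mul0r,mulr0) eqxx.
Qed.

Lemma chi_conj w c i : (chi w c i)^* = chi w c i.
Proof. by rewrite /chi rmorphM /= !ind_conj. Qed.

Lemma sigma_Kc_sq (w : 'I_n.+1) (c : 'I_D) :
  let s := \sum_j (Kc w c *m Psi) j 0 in
  s * s^* = ind (full w c) * M%:R * \sum_i chi w c i * (Psi i 0 * (Psi i 0)^*).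
Proof.
rewrite /= sigma_Kc.
have [hf|hf] := boolP (full w c); last by rewrite [ind false]/ind !mul0r.
rewrite -(chunk_card hf) [ind true]/ind !mul1r rmorph_sum big_distrl /=.
rewrite big_distrl /=; apply: eq_bigr => i _.
rewrite big_distrr /= mulr_sumr; apply: eq_bigr => i' _.
rewrite rmorphM /= chi_conj.
have [e|ne] := eqVneq (chi w c i * chi w c i') 0.
  transitivity ((chi w c i * chi w c i') * (Psi i 0 * (Psi i' 0)^*)); first by ring.
  transitivity ((chi w c i * chi w c i') * (Psi i' 0 * (Psi i' 0)^*)); last by ring.
  by rewrite e !mul0r.
rewrite (Psi_eq (chi_wt ne)); ring.
Qed.


Lemma sigma_Kb l : \sum_j (Kb l *m Psi) j 0 = ind (~~ good l) * Psi l 0.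
Proof.
transitivity (\sum_(j < M) ind (j == 0 :> nat) * (ind (~~ good l) * Psi l 0)); last first.
  by rewrite (@sum_ind_eq M 0 (fun _ => ind (~~ good l) * Psi l 0)) ?M_gt0.
apply: eq_bigr => j _; rewrite mxE.
transitivity (ind (j == 0 :> nat) * \sum_i ind (i == l) * (ind (~~ good l) * Psi i 0)).
  by rewrite mulr_sumr; apply: eq_bigr => i _; rewrite mxE; ring.
by rewrite (@sum_ind_fin _ l (fun i => ind (~~ good l) * Psi i 0)).
Qed.

Definition sig (K : 'M[C]_(M, D)) := \sum_j (K *m Psi) j 0.

Lemma fid_sum : \tr (tens_pow m (phi2_proj R) *m apply_kraus ks (tens_pow n (psi *m adj psi))) =
  (2^-1) ^+ m * \sum_(K <- ks) sig K * (sig K)^*.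
Proof.
rewrite fid_formula tens_pow_outer /apply_kraus; congr (_ * _).
transitivity (\sum_(K <- ks) \sum_i \sum_j (K *m (Psi *m adj Psi) *m adj K) i j).
  under eq_bigr do under eq_bigr do rewrite summxE.
  under eq_bigr do rewrite exchange_big.
  by rewrite exchange_big.
by apply: eq_bigr => K _; rewrite sum_all_outer.
Qed.

Definition beta := \sum_i ind (~~ good i) * (Psi i 0 * (Psi i 0)^*).

Lemma sum_sig : \sum_(K <- ks) sig K * (sig K)^* =
  M%:R * (\sum_i ind (good i) * (Psi i 0 * (Psi i 0)^*)) + beta.
Proof.
rewrite big_cat !big_map /=; congr (_ + _).
  rewrite -(pair_bigA _ (fun w c => sig (Kc w c) * (sig (Kc w c))^*)) /=.
  under eq_bigr do under eq_bigr do rewrite /sig sigma_Kc_sq.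
  transitivity (M%:R * \sum_i (Psi i 0 * (Psi i 0)^*) *
     (\sum_(w < n.+1) ind (w == wt i :> nat) * \sum_(c < D) ind (c == (rk i %/ M)%N :> nat) * ind (full w c))).
    rewrite [RHS]mulr_sumr.
    under eq_bigr do under eq_bigr do rewrite mulr_sumr.
    under eq_bigr do rewrite exchange_big.
    rewrite exchange_big /=; apply: eq_bigr => i _.
    rewrite mulrA mulr_sumr; apply: eq_bigr => w _.
    rewrite mulrA mulr_sumr; apply: eq_bigr => c _.
    rewrite /chi [wt i == w]eq_sym; ring.
  congr (_ * _); apply: eq_bigr => i _.
  rewrite (@sum_ind_eq n.+1 (wt i) (fun w => \sum_(c < D) ind (c == (rk i %/ M)%N :> nat) * ind (full w c))); last by rewrite ltnS wt_le.
  rewrite (@sum_ind_eq D (rk i %/ M)%N (fun c => ind (full (wt i) c))).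
    by rewrite /good mulrC.
  by apply: leq_ltn_trans (rk_ltD i); exact: leq_div.
rewrite /beta; apply: eq_bigr => l _; rewrite /sig sigma_Kb rmorphM /= ind_conj.
transitivity ((ind (~~ good l) * ind (~~ good l)) * (Psi l 0 * (Psi l 0)^*)); first by ring.
by rewrite ind_idem.
Qed.

Hypothesis hu : adj psi *m psi = 1%:M.

Lemma fid_proto : \tr (tens_pow m (phi2_proj R) *m apply_kraus ks (tens_pow n (psi *m adj psi))) =
  1 - (1 - (2^-1) ^+ m) * beta.
Proof.
rewrite fid_sum sum_sig.
have h1 : \sum_i ind (good i) * (Psi i 0 * (Psi i 0)^*) = 1 - beta.
  rewrite -(@tvec_norm R n psi hu) /beta -sumrB; apply: eq_bigr => i _.
  by rewrite ind_not; ring.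
have h2 : (2^-1 : C) ^+ m * M%:R = 1.
  by rewrite natrX -exprMn mulVf ?expr1n ?pnatr_eq0.
rewrite h1 mulrDr mulrA h2; ring.
Qed.


Lemma beta_ge0 : 0 <= beta.
Proof.
apply: sumr_ge0 => i _; apply: mulr_ge0; last exact: mul_conjC_ge0.
by rewrite /ind ler0n.
Qed.

Lemma sum_ind_card (P : pred 'I_D) : \sum_i ind (P i) = (#|P|)%:R.
Proof.
rewrite -sumr_const [RHS]big_mkcond /=; apply: eq_bigr => i _.
by rewrite /ind; have -> : (i \in P) = P i by []; case: (P i).
Qed.

Lemma bad_bounds i : ~~ good i ->
  ((size (cls (wt i)) %/ M) * M <= rk i)%N /\ (rk i - (size (cls (wt i)) %/ M) * M < M)%N.
Proof.
rewrite /good /full -ltnNge => h.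
have hM := M_gt0; have hr := rk_lt i.
set N := size (cls (wt i)) in h hr *; set r := rk i in h hr *.
have e1 := divn_eq N M; have e2 := divn_eq r M.
have l1 := ltn_pmod N hM; have l2 := ltn_pmod r hM.
have h3 : (N %/ M <= r %/ M)%N.
  by rewrite -ltnS ltn_divLR.
have h4 : (N %/ M * M <= r %/ M * M)%N by rewrite leq_mul2r h3 orbT.
split; first by apply: leq_trans h4 _; rewrite {2}e2 leq_addr.
rewrite ltn_subLR; last by apply: leq_trans h4 _; rewrite {2}e2 leq_addr.
by apply: leq_trans hr _; rewrite {1}e1 leq_add2l ltnW.
Qed.

Lemma card_bad : (#|[pred i | ~~ good i]| <= n.+1 * M)%N.
Proof.
pose f (i : 'I_D) : 'I_n.+1 * 'I_M :=
  (inord (wt i), Ordinal (ltn_pmod (rk i - (size (cls (wt i)) %/ M) * M) M_gt0)).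
rewrite -(@card_in_imset _ _ f); last first.
  move=> i i'; rewrite !inE => hi hi' [] /(congr1 val) /=.
  rewrite !inordK ?ltnS ?wt_le // => hw.
  move: hi hi'; rewrite /= hw => /bad_bounds [b1 b2] /bad_bounds [b1' b2'].
  rewrite -hw in b1' b2' *; rewrite !modn_small // => hr.
  apply: rk_inj => //; move: hr b1 b1'.
  set x := (_ * M)%N => hr b1 b1'.
  by rewrite -(subnK b1) -(subnK b1') hr.
by apply: leq_trans (max_card _) _; rewrite card_prod !card_ord.
Qed.

Variable pm : R.
Hypothesis hpm : forall b : 'I_2, psi b 0 * (psi b 0)^* <= (pm%:C)%C.

Lemma Psi_sq_le i : Psi i 0 * (Psi i 0)^* <= ((pm%:C)%C) ^+ n.
Proof.
have <- : \prod_(k < n) (pm%:C)%C = ((pm%:C)%C) ^+ n by rewrite prodr_const card_ord.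
rewrite mxE rmorph_prod -big_split /=.
apply: ler_prod => k _; apply/andP; split; [exact: mul_conjC_ge0 | exact: hpm].
Qed.

Lemma beta_le : beta <= ((pm%:C)%C) ^+ n * (n.+1 * M)%:R.
Proof.
apply: (@le_trans _ _ (\sum_i ind (~~ good i) * ((pm%:C)%C) ^+ n)).
  apply: ler_sum => i _; apply: ler_wpM2l; [by rewrite /ind ler0n | exact: Psi_sq_le].
rewrite -big_distrl /= sum_ind_card mulrC; apply: ler_wpM2l.
  by apply: exprn_ge0; apply: le_trans (hpm 0); exact: mul_conjC_ge0.
by rewrite ler_nat card_bad.
Qed.

End Proto.

End P6.
Import P6.

Module P7.
Set Implicit Arguments. Unset Strict Implicit.
Local Open Scope classical_set_scope.
Import numFieldNormedType.Exports.
Section S7.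
Variable R : realType.
Local Notation C := R[i].

Lemma sum2 (F : 'I_2 -> C) : \sum_(b < 2) F b = F 0 + F 1.
Proof. by rewrite big_ord_recl big_ord1; congr (_ + F _); apply: val_inj. Qed.

Definition cval (psi : 'cV[C]_2) (t0 t1 : R) : R :=
  complex.Re ((adj (max_coh t0 t1) *m (psi *m adj psi) *m max_coh t0 t1) 0 0).

Lemma expi_norm (t : R) : expi t * (expi t)^* = 1.
Proof.
rewrite -normCK normc_def /expi /= cos2Dsin2 sqrtr1.
by rewrite expr1n.
Qed.

Lemma sconjs : ((Num.sqrt (2 : R))^-1)%:C%C * (((Num.sqrt (2 : R))^-1)%:C%C)^* = 2^-1 :> C.
Proof.
set x := (Num.sqrt (2 : R))^-1.
have -> : (x%:C%C)^* = x%:C%C by apply: conj_Creal; rewrite complex_real.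
rewrite -rmorphM /= -expr2 /x exprVn sqr_sqrtr ?ler0n //.
by rewrite fmorphV /= rmorph_nat.
Qed.

Lemma cvalE (psi : 'cV[C]_2) (t0 t1 : R) : adj psi *m psi = 1%:M ->
  (cval psi t0 t1)%:C%C = 2^-1 + 'Re ((expi t0)^* * psi 0 0 * expi t1 * (psi 1 0)^*).
Proof.
move=> /unitE hu.
rewrite /cval.
set s := ((Num.sqrt (2 : R))^-1)%:C%C.
set e0 := expi t0; set e1 := expi t1; set a := psi 0 0; set b := psi 1 0.
have ha : a * a^* + b * b^* = 1 by rewrite -hu sum2.
set v := (adj (max_coh t0 t1) *m (psi *m adj psi) *m max_coh t0 t1) 0 0.
have vE : v = (s^* * (e0^* * a + e1^* * b)) * (s * (e0 * a^* + e1 * b^*)).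
  rewrite /v mulmxA -mulmxA mx11E !mxE !sum2 !adjE !mxE /=.
  rewrite !rmorphM /= -/s -/e0 -/e1 -/a -/b; ring.
have vE2 : v = 2^-1 + 'Re (e0^* * a * e1 * b^*).
  rewrite vE ReE !rmorphM /= !conjCK.
  have hs := sconjs; rewrite -/s in hs.
  have h0 := expi_norm t0; have h1 := expi_norm t1; rewrite -/e0 in h0; rewrite -/e1 in h1.
  transitivity ((s * s^*) * ((e0 * e0^*) * (a * a^*) + (e1 * e1^*) * (b * b^*)
     + (e0^* * a * e1 * b^* + e0 * a^* * e1^* * b))); first by ring.
  by rewrite hs h0 h1 !mul1r ha; field.
have vreal : v \is Num.real.
  by rewrite vE2 rpredD ?Creal_Re // rpredV rpred_nat.
by rewrite -/v -vE2 -[RHS](RRe_real vreal).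
Qed.

End S7.
Section S7b.
Variable R : realType.
Local Notation C := R[i].

Lemma half_C : (2^-1 : C) = ((2^-1 : R)%:C)%C.
Proof. by rewrite fmorphV /= rmorph_nat. Qed.

Lemma cfset (psi : 'cV[C]_2) :
  [set x : R | exists t0 t1 : R, t0 \in `[0, 2 * pi]%R /\ t1 \in `[0, 2 * pi]%R /\
      x = complex.Re ((adj (max_coh t0 t1) *m (psi *m adj psi) *m max_coh t0 t1) 0 0)]
  = [set x | exists t0 t1 : R, t0 \in `[0, 2 * pi]%R /\ t1 \in `[0, 2 * pi]%R /\
      x = cval psi t0 t1].
Proof. by []. Qed.

Lemma in02pi (t : R) : 0 <= t <= 2 * pi -> t \in `[0, 2 * pi]%R.
Proof. by rewrite in_itv /=. Qed.

Lemma Fc_le_half (psi : 'cV[C]_2) (b : 'I_2) : adj psi *m psi = 1%:M ->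
  psi b 0 = 0 -> coherence_fraction (psi *m adj psi) <= 2^-1.
Proof.
move=> hu hb; rewrite /coherence_fraction cfset.
have hpi := pi_gt0 R.
apply: ge_sup.
  exists (cval psi 0 0), 0, 0; split; first by apply: in02pi; apply/andP; split; lra.
  by split; first by apply: in02pi; apply/andP; split; lra.
move=> _ [t0 [t1 [_ [_ ->]]]].
have : (cval psi t0 t1)%:C%C = (2^-1 : R)%:C%C.
  rewrite cvalE // -half_C.
  case: b hb => [[|[|b]] hb'] // hb.
    have -> : psi 0 0 = 0 by rewrite -hb; congr (psi _ 0); apply: val_inj.
    by rewrite mulr0 !mul0r raddf0 addr0.
  have -> : psi 1 0 = 0 by rewrite -hb; congr (psi _ 0); apply: val_inj.
  by rewrite conjC0 mulr0 raddf0 addr0.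
by move/complexI => ->.
Qed.

Lemma Fc_gt_half (psi : 'cV[C]_2) : adj psi *m psi = 1%:M ->
  psi 0 0 != 0 -> psi 1 0 != 0 -> 2^-1 < coherence_fraction (psi *m adj psi).
Proof.
move=> hu ha hb; rewrite /coherence_fraction cfset.
have hpi := pi_gt0 R.
set S := [set x | _].
have hub : ubound S 2.
  move=> _ [t0 [t1 [_ [_ ->]]]].
  rewrite -lecR cvalE // half_C.
  set X := _ * _.
  have hX : 'Re X <= `|X| by have [] := leif_Re_Creal X.
  have hn : `|X| <= 1.
    have hu' := @unitE R psi hu; rewrite sum2 in hu'.
    have : `|X| ^+ 2 <= 1.
      rewrite normCK /X !rmorphM /= !conjCK.
      have h0 := expi_norm t0; have h1 := expi_norm t1.
      have -> : (expi t0)^* * psi 0 0 * expi t1 * (psi 1 0)^* *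
        ((expi t0 * (psi 0 0)^* * (expi t1)^* * psi 1 0)) =
        (expi t0 * (expi t0)^*) * (expi t1 * (expi t1)^*) *
        ((psi 0 0 * (psi 0 0)^*) * (psi 1 0 * (psi 1 0)^*)) by ring.
      rewrite h0 h1 !mul1r.
      have ga := mul_conjC_ge0 (psi 0 0); have gb := mul_conjC_ge0 (psi 1 0).
      set p := psi 0 0 * _ in ga gb hu' *; set q := psi 1 0 * _ in ga gb hu' *.
      have hq : q = 1 - p by rewrite -hu' addrC addKr.
      rewrite hq -subr_ge0.
      have : 0 <= (p - 2^-1) ^+ 2 by rewrite -realEsqr rpredB ?ger0_real // rpredV rpred_nat.
      move: hq ga gb => _ _ _.
      have e : 1 - p * (1 - p) = (p - 2^-1) ^+ 2 + 3/4 by field.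
      rewrite e => h; apply: addr_ge0 => //.
    have hge := normr_ge0 X.
    move=> h; rewrite -(ler_pXn2r (n := 2)) ?expr1n ?nnegrE //.
  have -> : ((2 : R)%:C)%C = 2 by rewrite rmorph_nat.
  have -> : ((2^-1 : R)%:C)%C = 2^-1 :> C by rewrite -half_C.
  have e : (2 : C) = 2^-1 + (1 + 2^-1) by field.
  rewrite [X in _ <= X]e lerD2l; apply: le_trans hX _; apply: le_trans hn _.
  by rewrite lerDl invr_ge0 ler0n.
have hsup : has_ubound S by exists 2.
suff [t0 [t1 [h0 [h1 hlt]]]] : exists t0 t1 : R, t0 \in `[0, 2 * pi]%R /\ t1 \in `[0, 2 * pi]%R /\
    0 < complex.Re ((expi t0)^* * psi 0 0 * expi t1 * (psi 1 0)^*).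
  apply: (@lt_le_trans _ _ (cval psi t0 t1)); last first.
    by apply: (ub_le_sup hsup); exists t0, t1.
  rewrite -ltcR cvalE // -half_C ltrDl -complexRe.
  by move: hlt; rewrite -(ltcR 0).
have i0 : (0 : R) \in `[0, 2 * pi]%R by apply: in02pi; apply/andP; split; lra.
have i1 : (pi : R) \in `[0, 2 * pi]%R by apply: in02pi; apply/andP; split; lra.
have i2 : (pi / 2 : R) \in `[0, 2 * pi]%R by apply: in02pi; apply/andP; split; lra.
have e0 : expi (0 : R) = 1 by rewrite /expi cos0 sin0.
have e1 : expi (pi : R) = -1.
  by rewrite /expi cospi sinpi; change (Complex (-1) 0 = Complex (-1) (- 0) :> C); rewrite oppr0.
have e2 : expi (pi / 2 : R) = 'i by rewrite /expi cos_pihalf sin_pihalf -complexiE.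
set w := psi 0 0 * (psi 1 0)^*.
have wn0 : w != 0 by rewrite mulf_neq0 // conjC_eq0.
have [Rw0|Rwn0] := eqVneq (complex.Re w) 0.
  have Iwn0 : complex.Im w != 0.
    apply: contra wn0 => /eqP Iw0; apply/eqP.
    by rewrite [w]complexE Rw0 Iw0 !rmorph0 mulr0 addr0.
  have [Iwlt|Iwgt] := ltP (complex.Im w) 0.
    exists 0, (pi / 2); do 2!split => //.
    have -> : (expi 0)^* * psi 0 0 * expi (pi / 2) * (psi 1 0)^* = w * 'i%C.
      by rewrite e0 e2 conjC1 complexiE /w; ring.
    by clearbody w; clear wn0; case: w Rw0 Iwlt Iwn0 => x y /= *; lra.
  exists (pi / 2), 0; do 2!split => //.
  have -> : (expi (pi / 2))^* * psi 0 0 * expi 0 * (psi 1 0)^* = w * (- 'i%C).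
    by rewrite e0 e2 conjCi complexiE /w; ring.
  by clearbody w; clear wn0; case: w Rw0 Iwgt Iwn0 => x y /= *; lra.
have [Rwlt|Rwgt] := ltP (complex.Re w) 0.
  exists 0, pi; do 2!split => //.
  have -> : (expi 0)^* * psi 0 0 * expi pi * (psi 1 0)^* = w * (-1).
    by rewrite e0 e1 conjC1 /w; ring.
  by clearbody w; clear wn0; case: w Rwn0 Rwlt => x y /= *; lra.
exists 0, 0; do 2!split => //.
have -> : (expi 0)^* * psi 0 0 * expi 0 * (psi 1 0)^* = w.
  by rewrite e0 conjC1 /w; ring.
by clearbody w; clear wn0; case: w Rwn0 Rwgt => x y /= *; lra.
Qed.

End S7b.

End P7.
Import P7.

Module P8.
Set Implicit Arguments. Unset Strict Implicit.
Local Open Scope classical_set_scope.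
Import numFieldNormedType.Exports.
Section S8.
Variable R : realType.
Local Notation C := R[i].

Lemma cvg_bound_ev (u : nat -> R) (l c : R) : 0 <= c ->
  (forall n, (0 < n)%N -> `|l - u n| <= c * harmonic n) -> u @ \oo --> l.
Proof.
move=> c0 hb; apply/cvgrPdist_lt => e e0.
have c1 : 0 < c + 1 by lra.
have := @cvg_harmonic R; move/cvgrPdist_lt => /(_ (e / (c + 1))).
rewrite divr_gt0 // => /(_ isT) hh.
near=> n.
have n0 : (0 < n)%N by near: n; exists 1%N.
have hn : `|0 - harmonic n| < e / (c + 1) by near: n.
apply: le_lt_trans (hb n n0) _.
move: hn; rewrite sub0r normrN ger0_norm ?harmonic_ge0 // => hn.
have h0 := @harmonic_ge0 R n.
have : (c + 1) * harmonic n < e by rewrite -ltr_pdivlMl // mulrC.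
nra.
Unshelve. all: by end_near.
Qed.

Lemma C_ge0E (z : C) : 0 <= z -> z = ((complex.Re z)%:C)%C.
Proof.
rewrite lecE => /andP [/eqP h _]; case: z h => x y /= h.
by rewrite h.
Qed.


Lemma nat_bound (n k : nat) : (0 < k)%N ->
  ((n.+1 * 2 ^ (n %/ k)) * n.+1 <= 2 * (k * k) * 8 ^ (n %/ k))%N.
Proof.
move=> k0; set q := (n %/ k)%N.
have e := divn_eq n k; have l := ltn_pmod n k0.
have h1 : (n.+1 <= k * q.+1)%N.
  rewrite -/q in e; rewrite {1}e mulnS addnC; lia.
have h2 : (q.+1 <= 2 ^ q)%N by exact: ltn_expl.
have e8 : (8 ^ q = 2 ^ q * 2 ^ q * 2 ^ q)%N by rewrite -!expnMn.
rewrite e8.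
have h3 : (n.+1 * n.+1 <= (k * q.+1) * (k * q.+1))%N by apply: leq_mul.
have h4 : (q.+1 * q.+1 <= 2 ^ q * 2 ^ q)%N by apply: leq_mul.
nia.
Qed.

Lemma distill (psi : 'cV[C]_2) : adj psi *m psi = 1%:M ->
  psi 0 0 != 0 -> psi 1 0 != 0 -> distillable (psi *m adj psi).
Proof.
move=> hu ha hb.
set pa := complex.Re (psi 0 0 * (psi 0 0)^*).
set pb := complex.Re (psi 1 0 * (psi 1 0)^*).
have ea : psi 0 0 * (psi 0 0)^* = (pa%:C)%C by apply: C_ge0E; exact: mul_conjC_ge0.
have eb : psi 1 0 * (psi 1 0)^* = (pb%:C)%C by apply: C_ge0E; exact: mul_conjC_ge0.
have pa0 : 0 < pa.
  rewrite -(ltcR 0) -ea lt_def mul_conjC_ge0 andbT mulf_neq0 // conjC_eq0 //.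
have pb0 : 0 < pb.
  rewrite -(ltcR 0) -eb lt_def mul_conjC_ge0 andbT mulf_neq0 // conjC_eq0 //.
have hsum : pa + pb = 1.
  have := @unitE R psi hu; rewrite sum2 ea eb -rmorphD => /(congr1 (@complex.Re R)).
  by [].
set pm := Num.max pa pb.
have pm1 : pm < 1 by rewrite /pm gt_max; apply/andP; split; lra.
have pm0 : 0 <= pm by rewrite /pm le_max; apply/orP; left; lra.
have hpm : forall b : 'I_2, psi b 0 * (psi b 0)^* <= (pm%:C)%C.
  move=> b; case: b => [[|[|b]] hb'] //.
    have -> : Ordinal hb' = 0 by apply: val_inj.
    by rewrite ea lecR /pm le_max lexx.
  have -> : Ordinal hb' = 1 by apply: val_inj.
  by rewrite eb lecR /pm le_max lexx orbT.
have [N _ hN] : \forall n \near \oo, `|0 - pm ^+ n| < 8^-1.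
  have := @cvg_expr R pm; rewrite ger0_norm // => /(_ pm1).
  by move/cvgrPdist_lt; apply; rewrite invr_gt0.
set k := N.+1.
have hk : pm ^+ k <= 8^-1.
  have := hN k (leqnSn N); rewrite sub0r normrN ger0_norm ?exprn_ge0 //.
  exact: ltW.
have k0 : (0 < k)%N by [].
set m := fun n => (n %/ k)%N.
have rate : achievable_rate (psi *m adj psi) (k%:R^-1).
  exists m, (fun n => ks R n (m n)); split; first by move=> n; exact: ks_incoh.
  split.
    apply: (@cvg_bound_ev _ _ 2) => // n n0.
    rewrite /harmonic /= /m.
    set q := (n %/ k)%N; set s := (n %% k)%N.
    have e : (n%:R : R) = q%:R * k%:R + s%:R by rewrite -natrM -natrD -divn_eq.
    have sk : (s%:R : R) <= k%:R by rewrite ler_nat ltnW // ltn_pmod.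
    have kpos : (0 : R) < k%:R by rewrite ltr0n.
    have npos : (0 : R) < n%:R by rewrite ltr0n.
    have diff : (k%:R^-1 - q%:R / n%:R : R) = s%:R / (k%:R * n%:R).
      have -> : (s%:R : R) = n%:R - q%:R * k%:R by rewrite e addrC addKr.
      by field; rewrite !gt_eqF.
    rewrite diff ger0_norm; last by apply: divr_ge0; rewrite ?ler0n ?mulr_ge0 // ltW.
    rewrite ler_pdivrMr ?mulr_gt0 // mulrAC ler_pdivlMr ?ltr0n //.
    rewrite mulrSr.
    have n1 : (1 : R) <= n%:R by rewrite ler1n.
    have s0 : (0 : R) <= s%:R by rewrite ler0n.
    nra.
  apply: (@cvg_bound_ev _ _ (2 * (k * k))%:R) => // n n0.
  rewrite fid_proto //.
  have ebt := C_ge0E (beta_ge0 n (m n) psi).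
  set br := complex.Re (beta n (m n) psi) in ebt *.
  have bra : (beta n (m n) psi) <= (((pm ^+ n) * (n.+1 * 2 ^ m n)%:R)%:C)%C.
    by rewrite rmorphM rmorphXn /= rmorph_nat; apply: beta_le.
  rewrite ebt lecR in bra.
  have br0 : 0 <= br by rewrite -(lecR 0) -ebt beta_ge0.
  rewrite inv2_powE ebt.
  set a := (2^-1 : R) ^+ m n.
  have -> : (1 - (1 - (a%:C)%C) * (br%:C)%C : C) = (((1 - (1 - a) * br)%:C)%C)
    by rewrite rmorphB rmorphM rmorphB rmorph1.
  rewrite /= sub0r opprB addrC addKr.
  have a0 : 0 <= a by rewrite exprn_ge0 // invr_ge0 ler0n.
  have a1 : a <= 1 by rewrite exprn_ile1 // ?invr_ge0 ?ler0n // invf_le1 ?ler1n ?ltr0n.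
  rewrite normrN ger0_norm; last by apply: mulr_ge0 => //; lra.
  apply: (@le_trans _ _ br); first by rewrite ler_piMl //; lra.
  apply: le_trans bra _.
  have p1 : pm ^+ n <= (8^-1 : R) ^+ m n.
    apply: (@le_trans _ _ ((pm ^+ k) ^+ m n)).
      rewrite -exprM; apply: ler_wiXn2l => //; first exact: ltW.
      by rewrite /m mulnC leq_divM.
    by apply: lerXn2r; rewrite ?nnegrE ?exprn_ge0 ?invr_ge0 ?ler0n.
  apply: (@le_trans _ _ ((8^-1 : R) ^+ m n * (n.+1 * 2 ^ m n)%:R)).
    by apply: ler_wpM2r; rewrite ?ler0n.
  rewrite exprVn -natrX mulrC /harmonic /=.
  rewrite ler_pdivrMr ?ltr0n ?expn_gt0 // mulrAC ler_pdivlMr ?ltr0n //.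
  by rewrite -!natrM ler_nat nat_bound.
rewrite /distillable.
apply: (@lt_le_trans _ _ ((k%:R^-1 : R)%:E)%E).
  by rewrite lte_fin invr_gt0 ltr0n.
by apply: ereal_sup_ubound; exists (k%:R^-1).
Qed.

End S8.

End P8.
Import P8.

Unset Implicit Arguments. Set Strict Implicit.

Theorem theorem2 (R : realType) (psi : 'cV[R[i]]_2) :
  adj psi *m psi = 1%:M ->
  distillable (psi *m adj psi) <-> coherence_fraction (psi *m adj psi) > 2^-1.
Proof.
move=> hu; split.
  move=> hd.
  have [h0|ha] := eqVneq (psi 0 0) 0.
    by exfalso; apply: (@not_distill R (psi *m adj psi) (fun n => @incoh_tens R psi 0 n hu h0)).
  have [h1|hb] := eqVneq (psi 1 0) 0.
    by exfalso; apply: (@not_distill R (psi *m adj psi) (fun n => @incoh_tens R psi 1 n hu h1)).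
  exact: Fc_gt_half.
move=> hf.
have [h0|ha] := eqVneq (psi 0 0) 0.
  by have := Fc_le_half hu h0; rewrite leNgt hf.
have [h1|hb] := eqVneq (psi 1 0) 0.
  by have := Fc_le_half hu h1; rewrite leNgt hf.
exact: distill.
Qed.
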